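(* Let $n\ge2$ and let $(V,\langle-,\ldots,-\rangle_n)$ be an alternating (resp. symmetric) $n$-linear space over a field $K$ with $V$ infinite-dimensional. Then $\langle-,\ldots,-\rangle_n$ is non-degenerate if and only if it is generic.
   Context: Let $\lozenge^{n-1}V$ be the exterior power $\bigwedge^{n-1}V$ in the alternating case and the symmetric power $\bigvee^{n-1}V$ in the symmetric case, and let $\langle-,-\rangle_2:(\lozenge^{n-1}V)\times V\to K$ be the induced bilinear form, $\langle\overline{v_1\otimes\cdots\otimes v_{n-1}},v\rangle_2=\langle v_1,\ldots,v_{n-1},v\rangle_n$ extended linearly. The form is non-degenerate if for every nonzero $t\in\lozenge^{n-1}V$ there is $w\in V$ with $\langle t,w\rangle_2\ne0$; it is generic if for every $m\in\mathbb{N}$, all linearly independent $t_1,\ldots,t_m\in\lozenge^{n-1}V$ and all $k_1,\ldots,k_m\in K$ there is $w\in V$ with $\langle t_i,w\rangle_2=k_i$ for all $i\le m$. *)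

(* Defs.v *)
From HB Require Import structures.
From mathcomp Require Import all_boot all_order all_algebra all_fingroup.
Set Implicit Arguments. Unset Strict Implicit. Unset Printing Implicit Defensive.
Import GRing.Theory.
Local Open Scope ring_scope.

Inductive nkind := Alt | Sym.

Section Defs.
Variables (K : fieldType) (V : lmodType K).

Definition upd (k : nat) (x : {ffun 'I_k -> V}) (i : 'I_k) (v : V)
  : {ffun 'I_k -> V} := [ffun j => if j == i then v else x j].

Definition nmultilinear (n : nat) (f : {ffun 'I_n -> V} -> K) : Prop :=
  forall (i : 'I_n) (x : {ffun 'I_n -> V}) (c : K) (u v : V),
    f (upd x i (c *: u + v)) = c * f (upd x i u) + f (upd x i v).

Definition nalternating (n : nat) (f : {ffun 'I_n -> V} -> K) : Prop :=
  forall (x : {ffun 'I_n -> V}) (i j : 'I_n), i != j -> x i = x j -> f x = 0.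

Definition nsymmetric (n : nat) (f : {ffun 'I_n -> V} -> K) : Prop :=
  forall (x : {ffun 'I_n -> V}) (s : 'S_n), f [ffun i => x (s i)] = f x.

Definition nlin_form (kd : nkind) (n : nat) (f : {ffun 'I_n -> V} -> K) : Prop :=
  nmultilinear f /\ (if kd is Alt then nalternating f else nsymmetric f).

Definition infinite_dim : Prop :=
  forall s : seq V, exists v : V,
    ~ exists c : 'I_(size s) -> K, v = \sum_(i < size s) c i *: s`_i.

(* ---- The power \lozenge^k V (exterior or nsymmetric power) ----
   An element is represented by a formal linear combination
   (a finite list of (coefficient, k-tuple of vectors)) of pure tensors;
   it is zero in \lozenge^k V iff its coefficient function on V^k lies in
   the span of the defining relations (multilinearity and alternation,
   resp. symmetry). *)
Definition formal (k : nat) := seq (K * {ffun 'I_k -> V}).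

Definition fcoef (k : nat) (t : formal k) (x : {ffun 'I_k -> V}) : K :=
  \sum_(p <- t) (if p.2 == x then p.1 else 0).

Inductive gen (kd : nkind) (k : nat) : formal k -> Prop :=
| gen_add (x : {ffun 'I_k -> V}) (i : 'I_k) (u v : V) :
    gen kd [:: (1, upd x i (u + v)); (-1, upd x i u); (-1, upd x i v)]
| gen_scale (x : {ffun 'I_k -> V}) (i : 'I_k) (c : K) (u : V) :
    gen kd [:: (1, upd x i (c *: u)); (- c, upd x i u)]
| gen_alt (x : {ffun 'I_k -> V}) (i j : 'I_k) :
    kd = Alt -> i != j -> x i = x j -> gen kd [:: (1, x)]
| gen_sym (x : {ffun 'I_k -> V}) (s : 'S_k) :
    kd = Sym -> gen kd [:: (1, [ffun i => x (s i)]); (-1, x)].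

Definition lz_zero (kd : nkind) (k : nat) (t : formal k) : Prop :=
  exists gs : seq (K * formal k),
    (forall p, p \in gs -> gen kd p.2) /\
    forall x, fcoef t x = \sum_(p <- gs) p.1 * fcoef p.2 x.

Definition lincomb (k m : nat) (a : 'I_m -> K) (ts : 'I_m -> formal k)
  : formal k :=
  flatten [seq [seq (a i * p.1, p.2) | p <- ts i] | i <- enum 'I_m].

Definition lz_lin_indep (kd : nkind) (k m : nat) (ts : 'I_m -> formal k)
  : Prop :=
  forall a : 'I_m -> K, lz_zero kd (lincomb a ts) -> forall i, a i = 0.

(* concatenation (v_1, ..., v_{n-1}, w) *)
Definition ext_tuple (n : nat) (x : {ffun 'I_n.-1 -> V}) (w : V)
  : {ffun 'I_n -> V} :=
  [ffun i : 'I_n => if insub (val i) : option 'I_n.-1 is Some j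
                    then x j else w].

(* the induced form <-,->_2 on (\lozenge^{n-1} V) x V *)
Definition pair2 (n : nat) (f : {ffun 'I_n -> V} -> K)
  (t : formal n.-1) (w : V) : K :=
  \sum_(p <- t) p.1 * f (ext_tuple p.2 w).

Definition nondegenerate_form (kd : nkind) (n : nat)
  (f : {ffun 'I_n -> V} -> K) : Prop :=
  forall t : formal n.-1, ~ lz_zero kd t -> exists w : V, pair2 f t w != 0.

Definition generic_form (kd : nkind) (n : nat)
  (f : {ffun 'I_n -> V} -> K) : Prop :=
  forall (m : nat) (ts : 'I_m -> formal n.-1) (ks : 'I_m -> K),
    lz_lin_indep kd ts ->
    exists w : V, forall i, pair2 f (ts i) w = ks i.

End Defs.

(* Main.v *)
Require Import Defs.
From HB Require Import structures.
From mathcomp Require Import all_boot all_order all_algebra all_fingroup.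
From Stdlib Require Import Classical.
Set Implicit Arguments. Unset Strict Implicit. Unset Printing Implicit Defensive.
Import GRing.Theory.
Local Open Scope ring_scope.

Section L.
Variables (K : fieldType) (V : lmodType K).

Lemma sum_lincomb k m (a : 'I_m -> K) (ts : 'I_m -> formal V k)
  (G : {ffun 'I_k -> V} -> K) :
  \sum_(p <- lincomb a ts) p.1 * G p.2 =
  \sum_i a i * \sum_(p <- ts i) p.1 * G p.2.
Proof.
rewrite /lincomb big_flatten /= big_map big_enum /=.
apply: eq_bigr => i _; rewrite big_map big_distrr /=.
by apply: eq_bigr => p _; rewrite mulrA.
Qed.

Lemma fcoefE k (t : formal V k) x :
  fcoef t x = \sum_(p <- t) p.1 * (p.2 == x)%:R.
Proof. by apply: eq_bigr => p _; case: eqP; rewrite ?mulr1 ?mulr0. Qed.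

Lemma fcoef_lincomb k m (a : 'I_m -> K) (ts : 'I_m -> formal V k) x :
  fcoef (lincomb a ts) x = \sum_i a i * fcoef (ts i) x.
Proof.
rewrite fcoefE (sum_lincomb a ts (fun y => (y == x)%:R)).
by apply: eq_bigr => i _; rewrite fcoefE.
Qed.

Lemma indep1 kd k (t : formal V k) : ~ lz_zero kd t ->
  lz_lin_indep kd (fun _ : 'I_1 => t).
Proof.
move=> nz a [gs [Hg He]] i.
have -> : i = ord0 by apply: val_inj; case: i => [[]].
case: (eqVneq (a ord0) 0) => // a0; exfalso; apply: nz.
exists [seq ((a ord0)^-1 * p.1, p.2) | p <- gs]; split.
  move=> p /mapP [q qin ->]. have := Hg q qin. done.
move=> x; have := He x; rewrite fcoef_lincomb big_ord1 big_map => E.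
rewrite -[fcoef t x](mulKf a0) E big_distrr /=.
by apply: eq_bigr => p _; rewrite mulrA.
Qed.


Section Lin.
Variable l : V -> K.
Hypothesis linl : forall c u v, l (c *: u + v) = c * l u + l v.
Lemma lin0 : l 0 = 0.
Proof. have := linl 1 0 0; rewrite scaler0 addr0 mul1r => E. by apply: (addrI (l 0)); rewrite addr0 -E. Qed.
Lemma linZ c u : l (c *: u) = c * l u.
Proof. by have := linl c u 0; rewrite addr0 lin0 addr0. Qed.
Lemma linD u v : l (u + v) = l u + l v.
Proof. by have := linl 1 u v; rewrite scale1r mul1r. Qed.
Lemma linB u v : l (u - v) = l u - l v.
Proof. by rewrite addrC -scaleN1r linl mulN1r addrC. Qed.
Lemma linS m (c : 'I_m -> K) (ws : 'I_m -> V) :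
  l (\sum_j c j *: ws j) = \sum_j c j * l (ws j).
Proof.
elim/big_rec2: _; first exact: lin0.
by move=> j y1 y2 _ <-; rewrite linl.
Qed.
End Lin.

Lemma sumS m (F : 'I_m.+1 -> K) :
  \sum_i F i = \sum_(j < m) F (lift ord_max j) + F ord_max.
Proof.
rewrite big_ord_recr /=; congr (_ + _); apply: eq_bigr => j _.
by congr F; apply: val_inj; rewrite /= /bump leqNgt ltn_ord.
Qed.

Lemma delta_sum m (k : 'I_m -> K) j : \sum_l k l * (j == l)%:R = k j.
Proof.
rewrite (bigD1 j) //= eqxx mulr1 big1 ?addr0 // => l /negbTE.
by rewrite eq_sym => ->; rewrite mulr0.
Qed.

Definition ext m (a : 'I_m -> K) (x0 : K) (i : 'I_m.+1) : K :=
  if unlift ord_max i is Some j then a j else x0.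

Lemma ext_lift m (a : 'I_m -> K) x0 j : ext a x0 (lift ord_max j) = a j.
Proof. by rewrite /ext liftK. Qed.
Lemma ext_max m (a : 'I_m -> K) x0 : ext a x0 ord_max = x0.
Proof. by rewrite /ext unlift_none. Qed.

Lemma surj_or_ann m (L : 'I_m -> V -> K)
  (linL : forall i c u v, L i (c *: u + v) = c * L i u + L i v) :
  (exists a : 'I_m -> K, (exists i, a i != 0) /\
     forall w, \sum_i a i * L i w = 0) \/
  (forall k : 'I_m -> K, exists w, forall i, L i w = k i).
Proof.
elim: m L linL => [|m IH] L linL.
  by right => k; exists 0 => -[].
pose L' := fun j : 'I_m => L (lift ord_max j).
have linL' : forall i c u v, L' i (c *: u + v) = c * L' i u + L' i v.
  by move=> *; apply: linL.
case: (IH L' linL') => [[a' [[j aj] Ha']] | H'].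
  left; exists (ext a' 0); split.
    by exists (lift ord_max j); rewrite ext_lift.
  move=> w; rewrite sumS ext_max mul0r addr0 -[X in _ = X](Ha' w).
  by apply: eq_bigr => l _; rewrite ext_lift.
have [ws Hws] : exists ws : 'I_m -> V, forall j i, L' i (ws j) = (i == j)%:R.
  apply: (@fin_all_exists _ (fun _ => V) (fun j w => forall i, L' i w = (i == j)%:R)) => j; exact: H'.
pose Lm := L ord_max.
pose g w := Lm w - \sum_j L' j w * Lm (ws j).
case: (classic (forall w, g w = 0)) => [Hg | Hg].
  left; exists (ext (fun j => - Lm (ws j)) 1); split.
    by exists ord_max; rewrite ext_max oner_neq0.
  move=> w; rewrite sumS ext_max mul1r -[RHS](Hg w) /g addrC.
  rewrite -sumrN; congr (_ + _); apply: eq_bigr => j _.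
  by rewrite ext_lift mulNr mulrC.
right => k.
have [w0 /eqP gw0] := not_all_ex_not _ _ Hg.
pose u := w0 - \sum_j L' j w0 *: ws j.
pose c := (k ord_max - \sum_j k (lift ord_max j) * Lm (ws j)) / g w0.
exists (c *: u + \sum_j k (lift ord_max j) *: ws j) => i.
case: (unliftP ord_max i) => [j ->|->].
  rewrite -/(L' j) linL' (linS (linL' j)) /u linB ?(linS (linL' j)); last exact: linL'.
  under eq_bigr do rewrite Hws.
  rewrite delta_sum subrr mulr0 add0r.
  under eq_bigr do rewrite Hws.
  by rewrite delta_sum.
rewrite (linL ord_max) (linS (linL ord_max)) /u linB; last exact: linL.
rewrite (linS (linL ord_max)) -/Lm.
have -> : Lm w0 - \sum_j L' j w0 * Lm (ws j) = g w0 by [].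
by rewrite /c divfK // subrK.
Qed.


Lemma ext_upd n' (x : {ffun 'I_n' -> V}) w :
  @ext_tuple K V n'.+1 x w = upd (@ext_tuple K V n'.+1 x 0) ord_max w.
Proof.
apply/ffunP => i; rewrite /upd /ext_tuple !ffunE.
case: insubP => [j ij vj | nij].
  rewrite ifF //.
  by apply/eqP => E; move: ij; rewrite E /= ltnn.
rewrite ifT //.
by apply/eqP/val_inj => /=; apply/eqP; rewrite eqn_leq -ltnS ltn_ord leqNgt nij.
Qed.

Lemma pair2_lin n' (f : {ffun 'I_n'.+1 -> V} -> K) (Hf : nmultilinear f)
  (t : formal V n') c u v :
  pair2 f t (c *: u + v) = c * pair2 f t u + pair2 f t v.
Proof.
rewrite /pair2 big_distrr -big_split; apply: eq_bigr => p _ /=.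
rewrite (ext_upd p.2 (c *: u + v)) (ext_upd p.2 u) (ext_upd p.2 v) Hf.
by rewrite mulrDr mulrCA.
Qed.
End L.

Theorem lemma2p5 (K : fieldType) (V : lmodType K) (kd : nkind) (n : nat)
  (f : {ffun 'I_n -> V} -> K) :
  (2 <= n)%N -> infinite_dim V -> nlin_form kd f ->
  (nondegenerate_form kd f <-> generic_form kd f).
Proof.
move=> n2 _ [Hml _]; case: n n2 f Hml => [|n'] // _ f Hml; split.
  move=> Hnd m ts ks Hind.
  have linL : forall i c u v, pair2 f (ts i) (c *: u + v) =
      c * pair2 f (ts i) u + pair2 f (ts i) v.
    by move=> i c u v; apply: pair2_lin.
  case: (surj_or_ann linL) => [[a [[i ai] Ha]] | Hs]; last exact: Hs ks.
  exfalso.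
  have Z : lz_zero kd (lincomb a ts).
    case: (classic (lz_zero kd (lincomb a ts))) => // nz.
    have [w] := Hnd _ nz.
    by rewrite /pair2 (sum_lincomb a ts (fun y => f (ext_tuple y w))) Ha eqxx.
  by move: ai; rewrite (Hind a Z i) eqxx.
move=> Hg t nz.
have [w Hw] := Hg 1%N (fun _ => t) (fun _ => 1) (indep1 nz).
by exists w; rewrite (Hw ord0) oner_neq0.
Qed.
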